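(* Let $(M_\alpha,\varphi_{\alpha\beta})$ be an inverse system, indexed by a countable upward directed poset, of injective $\mathbb{Z}$-modules and surjective homomorphisms $\varphi_{\alpha\beta}:M_\beta\to M_\alpha$, and let $M$ be its inverse limit. Let $M_{\mathrm{div}}$ be the largest divisible submodule of $M$, i.e. the sum of the images of all $\mathbb{Z}$-module homomorphisms $\mathbb{Q}\to M$. Then for every index $\alpha$, the composite $M_{\mathrm{div}}\hookrightarrow M\to M_\alpha$ (with $M\to M_\alpha$ the canonical projection) is surjective.
   Context: For $\mathbb{Z}$-modules (abelian groups), injective is equivalent to divisible. *)

(* Defs.v *)
(* Z-modules = zmodType; Q = rat (as an additive group). *)
From HB Require Import structures.
From mathcomp Require Import all_boot all_order all_algebra.
Set Implicit Arguments. Unset Strict Implicit. Unset Printing Implicit Defensive.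
Import GRing.Theory.
Local Open Scope ring_scope.

Definition is_hom (A B : zmodType) (f : A -> B) : Prop :=
  forall x y, f (x - y) = f x - f y.

Definition injective_zmod (E : zmodType) : Prop :=
  forall (A B : zmodType) (i : A -> B) (g : A -> E),
    is_hom i -> injective i -> is_hom g ->
    exists h : B -> E, is_hom h /\ forall a, h (i a) = g a.

Definition directed_poset (I : Type) (le : rel I) : Prop :=
  [/\ reflexive le, transitive le, antisymmetric le &
      forall a b, exists c, le a c /\ le b c].

(* Inverse system: phi a b : M b -> M a, meaningful only for le a b. *)
Definition inverse_system (I : Type) (le : rel I) (M : I -> zmodType)
  (phi : forall a b, M b -> M a) : Prop :=
  [/\ forall a b, le a b -> is_hom (phi a b),
      forall a (x : M a), phi a a x = x &
      forall a b c, le a b -> le b c ->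
        forall x : M c, phi a b (phi b c x) = phi a c x].

(* The inverse limit, as a subgroup of the product: compatible families. *)
Definition in_limit (I : Type) (le : rel I) (M : I -> zmodType)
  (phi : forall a b, M b -> M a) (x : forall i, M i) : Prop :=
  forall a b, le a b -> phi a b (x b) = x a.

(* A Z-module hom Q -> lim M (operations on the limit are componentwise). *)
Definition hom_Q_to_limit (I : Type) (le : rel I) (M : I -> zmodType)
  (phi : forall a b, M b -> M a) (g : rat -> forall i, M i) : Prop :=
  (forall q, in_limit le phi (g q)) /\
  (forall i, is_hom (fun q => g q i)).

(* M_div: sum of the images of all homs Q -> M, i.e. finite sums of
   elements of such images (componentwise sums). *)
Definition in_Mdiv (I : Type) (le : rel I) (M : I -> zmodType)
  (phi : forall a b, M b -> M a) (x : forall i, M i) : Prop :=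
  exists (n : nat) (g : 'I_n -> rat -> forall i, M i) (q : 'I_n -> rat),
    (forall k, hom_Q_to_limit le phi (g k)) /\
    forall i, x i = \sum_(k < n) g k (q k) i.

(* Main.v *)
Require Import Defs.
From HB Require Import structures.
From mathcomp Require Import all_boot all_order all_algebra ring.
Import GRing.Theory Num.Theory.
Set Implicit Arguments. Unset Strict Implicit.

Section Hom.
Local Open Scope ring_scope.
Lemma hom0 (A B : zmodType) (f : A -> B) : is_hom f -> f 0 = 0.
Proof. by move=> h; have := h 0 0; rewrite !subrr. Qed.
Lemma homN (A B : zmodType) (f : A -> B) : is_hom f -> forall x, f (- x) = - f x.
Proof. by move=> h x; have := h 0 x; rewrite sub0r (hom0 h) sub0r. Qed.
Lemma homD (A B : zmodType) (f : A -> B) : is_hom f -> forall x y, f (x + y) = f x + f y.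
Proof. by move=> h x y; have := h x (- y); rewrite opprK => ->; rewrite (homN h) opprK. Qed.
Lemma homMn (A B : zmodType) (f : A -> B) : is_hom f -> forall x n, f (x *+ n) = f x *+ n.
Proof.
move=> h x; elim=> [|n IH]; first by rewrite !mulr0n hom0.
by rewrite !mulrS (homD h) IH.
Qed.
Lemma homMz (A B : zmodType) (f : A -> B) : is_hom f -> forall x k, f (x *~ k) = f x *~ k.
Proof.
move=> h x [n|n]; first by rewrite -!pmulrn (homMn h).
by rewrite NegzE !mulrNz (homN h) -!pmulrn (homMn h).
Qed.

Lemma inj_div (E : zmodType) : injective_zmod E ->
  forall (m : E) (n : nat), exists z : E, z *+ n.+1 = m.
Proof.
move=> hE m n.
have h1 : is_hom (intr : int -> rat) by move=> x y; rewrite intrB.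
have h2 : injective (intr : int -> rat) by exact: intr_inj.
have h3 : is_hom (fun k : int => m *~ k) by move=> x y; rewrite mulrzBr.
have [h [hh hi]] := hE int rat intr (fun k => m *~ k) h1 h2 h3.
exists (h (n.+1%:R)^-1).
rewrite -(homMn hh) -[X in _ = X]mulr1z -hi /=.
congr h; rewrite -(mulr_natr (n.+1%:R^-1)) mulVf ?pnatr_eq0 //.
Qed.
End Hom.

Local Open Scope ring_scope.

Definition Kq (q : rat) (n : nat) : int := (numq q * ((n`!)%:Z %/ denq q)%Z)%R.
Definition Dq (q : rat) (n : nat) : bool := (`|denq q| %| n`!)%N.

Lemma KqE q n : Dq q n -> (Kq q n)%:~R = q * (n`!)%:R :> rat.
Proof.
move=> hd.
have hdz : (denq q %| (n`!)%:Z)%Z by rewrite dvdzE.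
have dq0 : (denq q)%:~R != 0 :> rat by rewrite intr_eq0 denq_neq0.
have e := divzK hdz.
have hq' : q * (denq q)%:~R = (numq q)%:~R by rewrite -{1}(divq_num_den q) mulfVK.
rewrite /Kq.
move: e; move: ((n`!)%:Z %/ denq q)%Z => k e.
have -> : (n`!)%:R = (k * denq q)%:~R :> rat.
  by rewrite pmulrn e.
by rewrite !intrM mulrCA hq' mulrC.
Qed.

Lemma DqS q n : Dq q n -> Dq q n.+1.
Proof. by rewrite /Dq factS => h; apply: dvdn_trans h (dvdn_mull _ _). Qed.

Lemma Dq_le q n : (`|denq q| <= n)%N -> Dq q n.
Proof.
move=> h; apply: dvdn_fact; rewrite h andbT absz_gt0; exact: denq_neq0.
Qed.

Lemma KqS q n : Dq q n -> Kq q n.+1 = Kq q n * n.+1%:Z.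
Proof.
move=> h; apply: (@intr_inj rat); rewrite [RHS]intrM !KqE ?DqS // pmulrn.
by rewrite -!pmulrn factS natrM; ring.
Qed.

Lemma KqB q1 q2 n : Dq q1 n -> Dq q2 n -> Dq (q1 - q2) n ->
  Kq (q1 - q2) n = Kq q1 n - Kq q2 n.
Proof.
move=> h1 h2 h3; apply: (@intr_inj rat); rewrite [RHS]intrB !KqE //.
by rewrite mulrBl.
Qed.

Lemma Kq10 : Kq 1 0 = 1.
Proof. by []. Qed.

Theorem corollary6 (I : countType) (le : rel I) (M : I -> zmodType)
  (phi : forall a b, M b -> M a) :
  directed_poset le ->
  @inverse_system I le M phi ->
  (forall i, injective_zmod (M i)) ->
  (forall a b, le a b -> forall y : M a, exists z : M b, phi a b z = y) ->
  forall (a : I) (y : M a),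
    exists x : forall i, M i,
      in_limit le phi x /\ in_Mdiv le phi x /\ x a = y.
Proof.
move=> [refl trans _ dir] [phihom phiid phicomp] inj surj a y.
have [c [c0 [cS ccof]]] : exists c : nat -> I, le a (c 0) /\
    (forall n, le (c n) (c n.+1)) /\ (forall i, exists n, le i (c n)).
  have dirb : forall x z : I, exists t, le x t && le z t.
    by move=> x z; have [t [h1 h2]] := dir x z; exists t; rewrite h1 h2.
  pose nxt (x : I) (n : nat) : I := xchoose (dirb x (odflt a (unpickle n))).
  pose c := fix f n := if n is n'.+1 then nxt (f n') n' else a.
  exists c; split; first exact: refl.
  split.
    by move=> n; have /andP [] := xchooseP (dirb (c n) (odflt a (unpickle n))).
  move=> i; exists (pickle i).+1.
  change (le i (nxt (c (pickle i)) (pickle i))); rewrite /nxt.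
  move: (xchooseP (dirb (c (pickle i)) (odflt a (unpickle (pickle i))))).
  move: (xchoose _) => t /andP [_]; by rewrite pickleK.
have cmono : forall n m, (n <= m)%N -> le (c n) (c m).
  move=> n; elim=> [|m IH]; first by rewrite leqn0 => /eqP ->; exact: refl.
  rewrite leq_eqVlt => /orP [/eqP -> | hlt]; first exact: refl.
  exact: trans (IH hlt) (cS m).
have step : forall n (v : M (c n)), exists z : M (c n.+1),
    phi (c n) (c n.+1) (z *+ n.+1) == v.
  move=> n v; have [u hu] := surj _ _ (cS n) v.
  have [z hz] := inj_div (inj _) u n.
  by exists z; rewrite hz hu.
have [w0 hw0] := surj _ _ c0 y.
pose w := fix f n : M (c n) :=
  match n as n0 return M (c n0) with
  | 0 => w0
  | n'.+1 => xchoose (step n' (f n'))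
  end.
have hw : forall n, phi (c n) (c n.+1) (w n.+1 *+ n.+1) = w n.
  by move=> n; apply/eqP; exact: (xchooseP (step n (w n))).
have STEP : forall i q m, le i (c m) -> Dq q m ->
    phi i (c m.+1) (w m.+1 *~ Kq q m.+1) = phi i (c m) (w m *~ Kq q m).
  move=> i q m hi hd.
  rewrite KqS // -(phicomp _ _ _ hi (cS _)); congr (phi i (c m) _).
  by rewrite mulrC mulrzA -pmulrn (homMz (phihom _ _ (cS _))) hw.
have WD' : forall i q n m, le i (c n) -> Dq q n -> (n <= m)%N ->
    phi i (c m) (w m *~ Kq q m) = phi i (c n) (w n *~ Kq q n).
  move=> i q n m hi hd; elim: m => [|m IH].
    by rewrite leqn0 => /eqP hn; subst n.
  rewrite leq_eqVlt => /orP [/eqP hn | hlt]; first by subst n.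
  have hle : (n <= m)%N by [].
  rewrite STEP ?IH //.
    exact: trans hi (cmono _ _ hle).
  elim: (m) hle => [|e IHe]; first by rewrite leqn0 => /eqP <-.
  rewrite leq_eqVlt => /orP [/eqP <- // | hlt']; exact: DqS (IHe hlt').
pose Ni i := xchoose (ccof i).
have hNi : forall i, le i (c (Ni i)) by move=> i; exact: xchooseP (ccof i).
pose g (q : rat) (i : I) : M i :=
  phi i (c (maxn (Ni i) `|denq q|)) (w (maxn (Ni i) `|denq q|) *~ Kq q (maxn (Ni i) `|denq q|)).
have G : forall q i n, le i (c n) -> Dq q n -> g q i = phi i (c n) (w n *~ Kq q n).
  move=> q i n hi hd; rewrite /g.
  set N := maxn (Ni i) `|denq q|.
  have hiN : le i (c N) by apply: trans (hNi i) (cmono _ _ (leq_maxl _ _)).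
  have hdN : Dq q N by apply: Dq_le; exact: leq_maxr.
  rewrite -(WD' i q N (maxn N n)) ?leq_maxl //.
  by rewrite -(WD' i q n (maxn N n)) ?leq_maxr.
have Gn : forall q i, exists n, le i (c n) && Dq q n.
  move=> q i; exists (maxn (Ni i) `|denq q|).
  rewrite Dq_le ?leq_maxr // andbT.
  exact: trans (hNi i) (cmono _ _ (leq_maxl _ _)).
have ghom : forall i, is_hom (fun q => g q i).
  move=> i q1 q2 /=.
  pose n := maxn (Ni i) (maxn `|denq q1| (maxn `|denq q2| `|denq (q1 - q2)|)).
  have hi : le i (c n) by exact: trans (hNi i) (cmono _ _ (leq_maxl _ _)).
  have h1 : Dq q1 n.
    by apply: Dq_le; rewrite /n !leq_max leqnn !orbT.
  have h2 : Dq q2 n.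
    by apply: Dq_le; rewrite /n !leq_max leqnn !orbT.
  have h3 : Dq (q1 - q2) n.
    by apply: Dq_le; rewrite /n !leq_max leqnn !orbT.
  rewrite !(G _ i n) // KqB // mulrzBr.
  exact: (phihom _ _ hi).
exists (g 1); split; last split.
- move=> a' b' hab.
  pose n := maxn (Ni b') `|denq (1 : rat)|.
  have hb : le b' (c n) by exact: trans (hNi b') (cmono _ _ (leq_maxl _ _)).
  have hd : Dq 1 n by apply: Dq_le; exact: leq_maxr.
  rewrite (G _ b' n) // (G _ a' n) //; last exact: trans hab hb.
  exact: phicomp.
- exists 1%N, (fun _ => g), (fun _ => 1); split.
    move=> k; split; last exact: ghom.
    move=> q a' b' hab.
    pose n := maxn (Ni b') `|denq q|.
    have hb : le b' (c n) by exact: trans (hNi b') (cmono _ _ (leq_maxl _ _)).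
    have hd : Dq q n by apply: Dq_le; exact: leq_maxr.
    rewrite (G _ b' n) // (G _ a' n) //; last exact: trans hab hb.
    exact: phicomp.
  by move=> i; rewrite big_ord1.
- rewrite (G _ a 0) //.
Qed.
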